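(* Let $A\in\mathrm{GL}(3,\mathbb{R})$ be a rotation of angle $\theta$ with $0<\theta<\pi$, and let $B=G^{-1}\,{}^tA^{-1}G$ for some $G\in\mathrm{GL}(3,\mathbb{R})$. Then $\det(\mathrm{Id}-AB)=0$ if and only if there exists a nonzero symmetric matrix $S$ such that $SB={}^tA^{-1}S$.
   Context: A matrix $A\in\mathrm{GL}(3,\mathbb{R})$ is a rotation of angle $\theta$ if there exist $Q\in\mathrm{GL}(3,\mathbb{R})$ and $\mu\ne0$ with $Q^{-1}AQ=\mu R_\theta$, where $R_\theta=\begin{pmatrix}1&0&0\\0&\cos\theta&-\sin\theta\\0&\sin\theta&\cos\theta\end{pmatrix}$. ${}^tM$ denotes the transpose of $M$. *)

(* Defs.v *)
From HB Require Import structures.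
From mathcomp Require Import all_boot all_order all_algebra.
From mathcomp Require Import all_classical all_reals all_analysis.
Set Implicit Arguments. Unset Strict Implicit. Unset Printing Implicit Defensive.
Import Order.TTheory GRing.Theory Num.Theory.
Local Open Scope ring_scope.

Definition rotmx (R : realType) (t : R) : 'M[R]_3 :=
  \matrix_(i < 3, j < 3)
    (if (i == 0%N :> nat) && (j == 0%N :> nat) then 1
     else if (i == 1%N :> nat) && (j == 1%N :> nat) then cos t
     else if (i == 1%N :> nat) && (j == 2%N :> nat) then - sin t
     else if (i == 2%N :> nat) && (j == 1%N :> nat) then sin t
     else if (i == 2%N :> nat) && (j == 2%N :> nat) then cos t
     else 0).

Definition is_rotation (R : realType) (A : 'M[R]_3) (t : R) : Prop :=
  exists (Q : 'M[R]_3) (mu : R),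
    Q \in unitmx /\ mu != 0 /\ invmx Q *m A *m Q = mu *: rotmx t.

(* Main.v *)
Require Import Defs.
From HB Require Import structures.
From mathcomp Require Import all_boot all_order all_algebra.
From mathcomp Require Import all_classical all_reals all_analysis.
From mathcomp Require Import ring lra.
Import Order.TTheory GRing.Theory Num.Theory.
Local Open Scope ring_scope.



Definition mx3 {F : fieldType} (l : seq (seq F)) : 'M[F]_3 :=
  \matrix_(i < 3, j < 3) nth 0 (nth [::] l i) j.

Lemma mx3E {F : fieldType} (M : 'M[F]_3) : M = mx3
  [:: [:: M 0 0; M 0 1; M 0 2]; [:: M 1 0; M 1 1; M 1 2]; [:: M 2 0; M 2 1; M 2 2]].
Proof.
apply/matrixP => i j; rewrite mxE.
by case: i => [[|[|[|i]]] Hi] //; case: j => [[|[|[|j]]] Hj] //=;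
  congr (M _ _); apply: val_inj.
Qed.

Lemma det3 {F : fieldType} (M : 'M[F]_3) : \det M =
  M 0 0 * (M 1 1 * M 2 2 - M 1 2 * M 2 1)
  - M 0 1 * (M 1 0 * M 2 2 - M 1 2 * M 2 0)
  + M 0 2 * (M 1 0 * M 2 1 - M 1 1 * M 2 0).
Proof.
pose f (i j : nat) := M (inord i) (inord j).
have -> : M = \matrix_(i < 3, j < 3) f i j.
  by apply/matrixP => i j; rewrite mxE /f !inord_val.
rewrite (expand_det_row _ 0) !big_ord_recl big_ord0 /cofactor.
rewrite !(expand_det_row _ 0) !big_ord_recl !big_ord0 /cofactor.
rewrite !det_mx11 !mxE /=.
rewrite !expr0 !expr1 ; ring.
Qed.

Lemma mx3_eq {F : fieldType} (l1 l2 : seq (seq F)) :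
  (forall i j : 'I_3, nth 0 (nth [::] l1 i) j = nth 0 (nth [::] l2 i) j) ->
  mx3 l1 = mx3 l2.
Proof. by move=> h; apply/matrixP => i j; rewrite !mxE. Qed.

Lemma mul3 {F : fieldType} (l1 l2 : seq (seq F)) : mx3 l1 *m mx3 l2 =
  \matrix_(i < 3, j < 3) (nth 0 (nth [::] l1 i) 0 * nth 0 (nth [::] l2 0) j
     + nth 0 (nth [::] l1 i) 1 * nth 0 (nth [::] l2 1) j
     + nth 0 (nth [::] l1 i) 2 * nth 0 (nth [::] l2 2) j).
Proof.
apply/matrixP => i j; rewrite !mxE !big_ord_recl big_ord0 !mxE /=.
by rewrite addr0 addrA.
Qed.

Definition Rm {F : fieldType} (c s : F) := mx3 [:: [:: 1; 0; 0]; [:: 0; c; -s]; [:: 0; s; c]].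
Definition Nb {F : fieldType} (a b e : F) := mx3 [:: [:: a; 0; 0]; [:: 0; b; e]; [:: 0; -e; b]].



Lemma l0 : ord0 = 0 :> 'I_3. Proof. exact: val_inj. Qed.
Lemma l1 : lift ord0 ord0 = 1 :> 'I_3. Proof. exact: val_inj. Qed.
Lemma l2 : lift ord0 (lift ord0 ord0) = 2 :> 'I_3. Proof. exact: val_inj. Qed.

Ltac expand := rewrite ?mxE /= ?big_ord_recl ?big_ord0 ?mxE /= ?l0 ?l1 ?l2.

Lemma linP {F : fieldType} (x y z : F) : x - y = z -> z = 0 -> x = y.
Proof. by move=> <- /eqP; rewrite subr_eq0 => /eqP. Qed.
Lemma linN {F : fieldType} (x y z : F) : y - x = z -> z = 0 -> x = y.
Proof. by move=> <- /eqP; rewrite subr_eq0 => /eqP. Qed.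
Lemma eqlP {F : fieldType} (l r t : F) : l = r -> t = l - r -> t = 0.
Proof. by move=> -> ->; rewrite subrr. Qed.
Lemma eqlN {F : fieldType} (l r t : F) : l = r -> t = r - l -> t = 0.
Proof. by move=> -> ->; rewrite subrr. Qed.

Ltac lin E := first [ (eapply eqlP; first exact: E); ring | (eapply eqlN; first exact: E); ring ].

Definition Lm {F : fieldType} (H : 'M[F]_3) := mx3
  [:: [:: H 0 1; H 0 2; 0]; [:: - H 1 0; - H 2 0; H 1 2 - H 2 1];
      [:: - H 2 0; H 1 0; H 1 1 + H 2 2]].

Lemma detK {F : fieldType} (c s : F) (H : 'M[F]_3) :
  \det ((Rm c s)^T *m H - H *m Rm c s) = s * ((1 - c)^+2 + s^+2) * \det (Lm H).
Proof.
rewrite !det3 /Lm [H]mx3E /Rm; expand; ring.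
Qed.

Lemma rot0 {F : fieldType} (c s x y : F) : (1 - c)^+2 + s^+2 != 0 ->
  (1 - c) * x + s * y = 0 -> - s * x + (1 - c) * y = 0 -> x = 0 /\ y = 0.
Proof.
move=> hq h1 h2.
have ex : ((1 - c)^+2 + s^+2) * x = 0.
  have -> : ((1 - c)^+2 + s^+2) * x = (1 - c) * ((1 - c) * x + s * y) - s * (- s * x + (1 - c) * y) by ring.
  by rewrite h1 h2; ring.
have ey : ((1 - c)^+2 + s^+2) * y = 0.
  have -> : ((1 - c)^+2 + s^+2) * y = s * ((1 - c) * x + s * y) + (1 - c) * (- s * x + (1 - c) * y) by ring.
  by rewrite h1 h2; ring.
by move/eqP: ex; move/eqP: ey; rewrite !mulf_eq0 (negbTE hq) /= => /eqP -> /eqP ->.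
Qed.

Lemma core {F : fieldType} (c s : F) (H : 'M[F]_3) : s != 0 -> (1 - c)^+2 + s^+2 != 0 ->
  (\det ((Rm c s)^T *m H - H *m Rm c s) = 0 <->
   exists N : 'M[F]_3, N != 0 /\ Rm c s *m N = N *m Rm c s /\
     (N *m H)^T = N *m H).
Proof.
move=> hs hq; rewrite detK; split.
  move/eqP; rewrite !mulf_eq0 (negbTE hs) (negbTE hq) /= => /det0P [v nv hv].
  exists (Nb (v 0 0) (v 0 1) (v 0 2)); split; last split.
  - apply: contra nv => /eqP /matrixP hN; apply/eqP/matrixP => i j.
    rewrite !mxE (ord1 i).
    case: j => [[|[|[|j]]] Hj] //.
    + by have := hN 0 0; rewrite !mxE /= => h; rewrite -h; congr (v _ _); apply: val_inj.
    + by have := hN 1 1; rewrite !mxE /= => h; rewrite -h; congr (v _ _); apply: val_inj.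
    + by have := hN 1 2; rewrite !mxE /= => h; rewrite -h; congr (v _ _); apply: val_inj.
  - rewrite /Rm /Nb; apply/matrixP => i j; expand.
    by case: i => [[|[|[|i]]] Hi] //; case: j => [[|[|[|j]]] Hj] //=; ring.
  - have e0 := congr1 (fun M : 'M[F]_(1,3) => M 0 0) hv.
    have e1 := congr1 (fun M : 'M[F]_(1,3) => M 0 1) hv.
    have e2 := congr1 (fun M : 'M[F]_(1,3) => M 0 2) hv.
    move: e0 e1 e2; rewrite /Lm; expand => e0 e1 e2.
    rewrite /Nb [H]mx3E; apply/matrixP => i j; expand.
    case: i => [[|[|[|i]]] Hi] //; case: j => [[|[|[|j]]] Hj] //=; try ring.
    all: try first [ (eapply linP; last exact: e0); ring | (eapply linN; last exact: e0); ring
               | (eapply linP; last exact: e1); ring | (eapply linN; last exact: e1); ring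
               | (eapply linP; last exact: e2); ring | (eapply linN; last exact: e2); ring ].
move=> [N [nN [hc hsym]]].
have E := fun i j => congr1 (fun M : 'M[F]_3 => M i j) hc.
have E01 := E 0 1; have E02 := E 0 2; have E10 := E 1 0; have E20 := E 2 0.
have E11 := E 1 1; have E12 := E 1 2.
move: E01 E02 E10 E20 E11 E12; rewrite [N]mx3E /Rm; expand.
move=> E01 E02 E10 E20 E11 E12.
have [n01 n02'] : N 0 1 = 0 /\ - N 0 2 = 0.
  apply: (@rot0 _ c s _ _ hq); lin E01 || lin E02.
move/eqP: n02'; rewrite oppr_eq0 => /eqP n02.
have [n10 n20] : N 1 0 = 0 /\ N 2 0 = 0.
  apply: (@rot0 _ c s _ _ hq); lin E10 || lin E20.

have n21 : N 2 1 = - N 1 2.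
  have : s * (N 2 1 + N 1 2) = 0 by lin E11.
  by move/eqP; rewrite mulf_eq0 (negbTE hs) /= addr_eq0 => /eqP.
have n22 : N 2 2 = N 1 1.
  have : s * (N 2 2 - N 1 1) = 0 by lin E12.
  by move/eqP; rewrite mulf_eq0 (negbTE hs) /= subr_eq0 => /eqP.
pose v : 'rV[F]_3 := \row_(j < 3) nth 0 [:: N 0 0; N 1 1; N 1 2] j.
have S := fun i j => congr1 (fun M : 'M[F]_3 => M i j) hsym.
have S01 := S 0 1; have S02 := S 0 2; have S12 := S 1 2.
rewrite [H]mx3E in S01 S02 S12; move: S01 S02 S12; expand; rewrite n01 n02 n10 n20 n21 n22.
move=> S01 S02 S12.
have hv : v *m Lm H = 0.
  apply/matrixP => i j; rewrite (ord1 i) /v /Lm; expand.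
  case: j => [[|[|[|j]]] Hj] //=.
  all: try first [ (eapply eqlP; first exact: S01); ring | (eapply eqlN; first exact: S01); ring
             | (eapply eqlP; first exact: S02); ring | (eapply eqlN; first exact: S02); ring
             | (eapply eqlP; first exact: S12); ring | (eapply eqlN; first exact: S12); ring ].
have nv : v != 0.
  apply: contra nN => /eqP /matrixP hv0.
  have a := hv0 0 0; have b := hv0 0 1; have e := hv0 0 2.
  move: a b e; rewrite /v; expand => a b e.
  apply/eqP; rewrite [N]mx3E; apply/matrixP => i j; expand.
  by case: i => [[|[|[|i]]] Hi] //; case: j => [[|[|[|j]]] Hj] //=;
    rewrite ?n01 ?n02 ?n10 ?n20 ?n21 ?n22 ?a ?b ?e ?oppr0.
have /eqP -> : \det (Lm H) == 0 by apply/det0P; exists v.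
by rewrite mulr0.
Qed.

Lemma trZ {F : fieldType} (a : F) (X : 'M[F]_3) : (a *: X)^T = a *: X^T.
Proof. by apply/matrixP => i j; rewrite !mxE. Qed.

Lemma inv_eq {F : fieldType} (X Y : 'M[F]_3) : X *m Y = 1%:M -> invmx X = Y.
Proof.
move=> h; have hX : X \in unitmx.
  by rewrite unitmxE unitfE; apply/eqP => d0; move: (congr1 determinant h);
     rewrite det_mulmx d0 mul0r det1 => /eqP; rewrite eq_sym oner_eq0.
by rewrite -[Y](mulKmx hX) h mulmx1.
Qed.

Lemma oRg {F : fieldType} {P P' : 'M[F]_3} (h : P *m P' = 1%:M) m (X : 'M[F]_(m,3)) :
  X *m P *m P' = X.
Proof. by rewrite -mulmxA h mulmx1. Qed.

Ltac simp hQ hQt hH o1 o2 := rewrite -?scalemxAl -?scalemxAr ?scalerA ?trmx_inv ?mulmxA;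
  do 4! rewrite -?scalemxAl -?scalemxAr ?scalerA ?mulmxA ?(mulmxK hQt) ?(mulmxKV hQt) ?(mulmxK hQ) ?(mulmxKV hQ)
     ?(mulmxK hH) ?(mulmxKV hH) ?(mulmxV hQt) ?(mulVmx hQt) ?(mulmxV hQ) ?(mulVmx hQ)
     ?(mulmxV hH) ?(mulVmx hH) ?mul1mx ?mulmx1 ?o1 ?o2 ?(oRg o1) ?(oRg o2).

Definition Am {F : fieldType} (Q Rt : 'M[F]_3) (mu : F) := mu *: (Q *m Rt *m invmx Q).
Definition Gm {F : fieldType} (Q H : 'M[F]_3) := (invmx Q)^T *m H *m invmx Q.
Definition Bm {F : fieldType} (Q H Rt : 'M[F]_3) (mu : F) := invmx (Gm Q H) *m invmx (Am Q Rt mu)^T *m Gm Q H.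

Lemma Cm_eq {F : fieldType} {Q H Rt : 'M[F]_3} {mu : F} (hQ : Q \in unitmx) (hH : H \in unitmx) (hmu : mu != 0) (o1 : Rt *m Rt^T = 1%:M) (o2 : Rt^T *m Rt = 1%:M) : invmx (Am Q Rt mu)^T = mu^-1 *: ((invmx Q)^T *m Rt *m Q^T).
Proof. have hQt : Q^T \in unitmx by rewrite unitmx_tr.
apply: inv_eq; rewrite /Am trZ !trmx_mul ?trmxK.
simp hQ hQt hH o1 o2. simp hQ hQt hH o1 o2. by rewrite mulfV // scale1r.
Qed.

Lemma Gi_eq {F : fieldType} {Q H Rt : 'M[F]_3} {mu : F} (hQ : Q \in unitmx) (hH : H \in unitmx) (hmu : mu != 0) (o1 : Rt *m Rt^T = 1%:M) (o2 : Rt^T *m Rt = 1%:M) : invmx (Gm Q H) = Q *m invmx H *m Q^T.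
Proof. have hQt : Q^T \in unitmx by rewrite unitmx_tr. by apply: inv_eq; rewrite /Gm; simp hQ hQt hH o1 o2. Qed.

Lemma Bm_eq {F : fieldType} {Q H Rt : 'M[F]_3} {mu : F} (hQ : Q \in unitmx) (hH : H \in unitmx) (hmu : mu != 0) (o1 : Rt *m Rt^T = 1%:M) (o2 : Rt^T *m Rt = 1%:M) : Bm Q H Rt mu = mu^-1 *: (Q *m invmx H *m Rt *m H *m invmx Q).
Proof. have hQt : Q^T \in unitmx by rewrite unitmx_tr. by rewrite /Bm (Cm_eq hQ hH hmu o1 o2) (Gi_eq hQ hH hmu o1 o2) /Gm; simp hQ hQt hH o1 o2. Qed.

Lemma AB_eq {F : fieldType} {Q H Rt : 'M[F]_3} {mu : F} (hQ : Q \in unitmx) (hH : H \in unitmx) (hmu : mu != 0) (o1 : Rt *m Rt^T = 1%:M) (o2 : Rt^T *m Rt = 1%:M) : Am Q Rt mu *m Bm Q H Rt mu = Q *m Rt *m invmx H *m Rt *m H *m invmx Q.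
Proof. have hQt : Q^T \in unitmx by rewrite unitmx_tr. by rewrite (Bm_eq hQ hH hmu o1 o2) /Am; simp hQ hQt hH o1 o2; rewrite mulfV // scale1r. Qed.


Lemma claim1 {F : fieldType} {Q H Rt : 'M[F]_3} {mu : F} (hQ : Q \in unitmx) (hH : H \in unitmx) (hmu : mu != 0) (o1 : Rt *m Rt^T = 1%:M) (o2 : Rt^T *m Rt = 1%:M) : \det (1%:M - Am Q Rt mu *m Bm Q H Rt mu) = 0 <-> \det (Rt^T *m H - H *m Rt) = 0.
Proof. have hQt : Q^T \in unitmx by rewrite unitmx_tr.
have hR : Rt \in unitmx.
  by rewrite unitmxE unitfE; apply/eqP => d0; move: (congr1 determinant o1);
     rewrite det_mulmx d0 mul0r det1 => /eqP; rewrite eq_sym oner_eq0.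
have E : 1%:M - Am Q Rt mu *m Bm Q H Rt mu =
  Q *m (Rt *m invmx H *m Rt *m (Rt^T *m H - H *m Rt) *m Rt^T) *m invmx Q.
  rewrite (AB_eq hQ hH hmu o1 o2) mulmxBr mulmxBl mulmxBr mulmxBl; simp hQ hQt hH o1 o2.
  by [].
have nz (X : 'M[F]_3) : X \in unitmx -> \det X != 0 by rewrite unitmxE unitfE.
rewrite E !det_mulmx; split => [/eqP|->]; last by rewrite !(mulr0, mul0r).
have hRt : Rt^T \in unitmx by rewrite unitmx_tr.
have hHi : invmx H \in unitmx by rewrite unitmx_inv.
have hQi : invmx Q \in unitmx by rewrite unitmx_inv.
rewrite !mulf_eq0 !(negbTE (nz _ hQ)) !(negbTE (nz _ hR)) !(negbTE (nz _ hRt))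
  !(negbTE (nz _ hHi)) !(negbTE (nz _ hQi)) /=.
by rewrite !orbF => /eqP.
Qed.

Lemma claim2 {F : fieldType} {Q H Rt : 'M[F]_3} {mu : F} (hQ : Q \in unitmx) (hH : H \in unitmx) (hmu : mu != 0) (o1 : Rt *m Rt^T = 1%:M) (o2 : Rt^T *m Rt = 1%:M) :
  (exists S : 'M[F]_3, S != 0 /\ S^T = S /\ S *m Bm Q H Rt mu = invmx (Am Q Rt mu)^T *m S) <->
  (exists N : 'M[F]_3, N != 0 /\ Rt *m N = N *m Rt /\ (N *m H)^T = N *m H).
Proof. have hQt : Q^T \in unitmx by rewrite unitmx_tr.
split.
  move=> [S [nS [hS hSB]]].
  exists (Q^T *m S *m Q *m invmx H); split; last split.
  - apply: contra nS => /eqP N0.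
    have -> : S = invmx Q^T *m (Q^T *m S *m Q *m invmx H) *m H *m invmx Q by simp hQ hQt hH o1 o2.
    by rewrite N0 mulmx0 !mul0mx.
  - have := congr1 (fun X => mu *: (Q^T *m X *m (Q *m invmx H))) hSB.
    rewrite (Bm_eq hQ hH hmu o1 o2) (Cm_eq hQ hH hmu o1 o2) /=; simp hQ hQt hH o1 o2; rewrite mulfV // !scale1r => ->.
    by simp hQ hQt hH o1 o2.
  - simp hQ hQt hH o1 o2; by rewrite !trmx_mul trmxK hS mulmxA.
move=> [N [nN [hc hsym]]].
have hc' m (X : 'M[F]_(m,3)) : X *m Rt *m N = X *m N *m Rt by rewrite -!mulmxA hc.
exists (invmx Q^T *m (N *m H) *m invmx Q); split; last split.
- apply: contra nN => /eqP S0.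
  have -> : N = Q^T *m (invmx Q^T *m (N *m H) *m invmx Q) *m Q *m invmx H by simp hQ hQt hH o1 o2.
  by rewrite S0 mulmx0 !mul0mx.
- by rewrite trmx_mul [(_ *m (N *m H))^T]trmx_mul hsym !trmx_inv trmxK !mulmxA.
- rewrite (Bm_eq hQ hH hmu o1 o2) (Cm_eq hQ hH hmu o1 o2); simp hQ hQt hH o1 o2; rewrite hc'.
  by simp hQ hQt hH o1 o2.
Qed.

Theorem lemma11p4 (R : realType) (A G : 'M[R]_3) (t : R) :
  A \in unitmx -> G \in unitmx ->
  is_rotation A t -> 0 < t -> t < pi ->
  let B := invmx G *m invmx A^T *m G in
  (\det (1%:M - A *m B) = 0 <->
   exists S : 'M[R]_3, S != 0 /\ S^T = S /\ S *m B = invmx A^T *m S).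
Proof.
move=> hA hG [Q [mu [hQ [hmu hrot]]]] t0 tpi B.
have hs : 0 < sin t by apply: sin_gt0_pi; rewrite t0 tpi.
have Req : rotmx t = Rm (cos t) (sin t).
  apply/matrixP => i j; rewrite !mxE.
  by case: i => [[|[|[|i]]] Hi] //; case: j => [[|[|[|j]]] Hj].
have cs := cos2Dsin2 t.
have o1 : rotmx t *m (rotmx t)^T = 1%:M.
  rewrite Req /Rm; apply/matrixP => i j; rewrite !mxE /= !big_ord_recl !big_ord0 !mxE /=.
  case: i => [[|[|[|i]]] Hi] //; case: j => [[|[|[|j]]] Hj] //=; rewrite ?mxE /=;
  first [ring | (apply: (eq_trans _ cs); ring)].
have o2 : (rotmx t)^T *m rotmx t = 1%:M.
  rewrite Req /Rm; apply/matrixP => i j; rewrite !mxE /= !big_ord_recl !big_ord0 !mxE /=.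
  case: i => [[|[|[|i]]] Hi] //; case: j => [[|[|[|j]]] Hj] //=; rewrite ?mxE /=;
  first [ring | (apply: (eq_trans _ cs); ring)].
have hQt : Q^T \in unitmx by rewrite unitmx_tr.
have eqA : A = Am Q (rotmx t) mu.
  have e : A = Q *m (invmx Q *m A *m Q) *m invmx Q.
    by rewrite !mulmxA (mulmxV hQ) mul1mx (mulmxK hQ).
  by rewrite {1}e hrot /Am -scalemxAr -scalemxAl.
have [H hH eqG] : exists2 H : 'M[R]_3, H \in unitmx & G = Gm Q H.
  exists (Q^T *m G *m Q); first by rewrite !unitmx_mul hQt hG hQ.
  by rewrite /Gm trmx_inv !mulmxA (mulVmx hQt) mul1mx (mulmxK hQ).
rewrite /B eqA eqG.
have -> : invmx (Gm Q H) *m invmx (Am Q (rotmx t) mu)^T *m Gm Q H =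
  Bm Q H (rotmx t) mu by [].
apply: (iff_trans (claim1 hQ hH hmu o1 o2)).
apply: (iff_trans _ (iff_sym (claim2 hQ hH hmu o1 o2))).
rewrite Req; apply: core.
  by rewrite gt_eqF.
rewrite gt_eqF // ltr_pwDr ?sqr_ge0 // exprn_gt0 //.
Qed.
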